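(* Let $A\in\mathcal{V}$ and $U\subseteq Max(A)$. Then $U$ is a clopen subset of $Max(A)$ if and only if there exist $\alpha,\beta\in K(A)$ such that $\alpha\vee\beta=\nabla_A$, $[\alpha,\beta]\subseteq Rad(A)$ and $U=Max(A)\cap D_A(\alpha)$.
   Context: $\mathcal{V}$ is a congruence modular, semidegenerate variety (no nontrivial algebra has a one-element subalgebra) of finite signature. For $B\in\mathcal{V}$: $Con(B)$ is its congruence lattice with bounds $\Delta_B,\nabla_B$, $[\cdot,\cdot]$ the Freese–McKenzie commutator, $K(B)$ the compact congruences. A congruence $\phi\neq\nabla_B$ is prime if $[\alpha,\beta]\subseteq\phi$ implies $\alpha\subseteq\phi$ or $\beta\subseteq\phi$; $Spec(B)$ is the set of primes, $Max(B)\subseteq Spec(B)$ the set of maximal congruences, $Rad(B)=\bigcap Max(B)$; $\rho(\theta)$ is the intersection of primes containing $\theta$. $D_B(\theta)=\{\phi\in Spec(B):\theta\not\subseteq\phi\}$; these sets are the open sets of a topology on $Spec(B)$, and $Max(B)$ has the subspace topology. $B(Con(B))$ is the Boolean algebra of complemented elements of $Con(B)$. When $K(B)$ is closed under the commutator, the reticulation $L(B)=K(B)/{\equiv}$ ($\alpha\equiv\beta$ iff $\rho(\alpha)=\rho(\beta)$) is a bounded distributive lattice with canonical map $\lambda_B$, mapping $B(Con(B))$ injectively into $B(L(B))$; the reticulation preserves the Boolean center if this map is onto $B(L(B))$. Standing assumption: for every $B\in\mathcal{V}$, $K(B)$ is closed under the commutator and the reticulation of $B$ preserves the Boolean center. 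*)

(* Defs.v *)
From mathcomp Require Import all_boot.
From Stdlib Require List. Import List.ListNotations.
Notation In := List.In.
Set Implicit Arguments. Unset Strict Implicit. Unset Printing Implicit Defensive.

Record signature := Signature { sym : finType; arity : sym -> nat }.

Record algebra (S : signature) := Algebra {
  carrier :> Type;
  op : forall f : sym S, ('I_(arity f) -> carrier) -> carrier }.

Inductive term (S : signature) (V : Type) : Type :=
| Var : V -> term S V
| App : forall f : sym S, ('I_(arity f) -> term S V) -> term S V.

Fixpoint eval (S : signature) (A : algebra S) (V : Type) (v : V -> A)
  (t : term S V) : A :=
  match t with
  | Var x => v x
  | App f ts => @op S A f (fun i => eval v (ts i))
  end.

(* A satisfies every identity t = u of Sigma.  The variety V is the class
   Mod(Sigma) of all algebras satisfying Sigma (Birkhoff). *)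
Definition satisfies (S : signature) (A : algebra S)
  (Sigma : term S nat -> term S nat -> Prop) : Prop :=
  forall t u, Sigma t u -> forall v : nat -> A, eval v t = eval v u.

Definition relA (T : Type) := T -> T -> Prop.
Definition rsub (T : Type) (r s : relA T) := forall x y, r x y -> s x y.
Definition reqv (T : Type) (r s : relA T) := forall x y, r x y <-> s x y.

Section Cong.
Variables (S : signature) (A : algebra S).

Definition is_congruence (th : relA A) : Prop :=
  (forall x, th x x) /\ (forall x y, th x y -> th y x) /\
  (forall x y z, th x y -> th y z -> th x z) /\
  (forall (f : sym S) (a b : 'I_(arity f) -> A),
      (forall i, th (a i) (b i)) -> th (@op S A f a) (@op S A f b)).

Definition cDelta : relA A := fun x y => x = y.
Definition cNabla : relA A := fun _ _ => True.

Definition cg (R : relA A) : relA A :=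
  fun x y => forall th, is_congruence th -> rsub R th -> th x y.

Definition cjoin (al be : relA A) : relA A := cg (fun x y => al x y \/ be x y).
Definition cmeet (al be : relA A) : relA A := fun x y => al x y /\ be x y.
Definition cjoin_fam (P : relA A -> Prop) : relA A :=
  cg (fun x y => exists th, P th /\ th x y).

Definition compact (th : relA A) : Prop :=
  is_congruence th /\
  forall P : relA A -> Prop, (forall ps, P ps -> is_congruence ps) ->
    rsub th (cjoin_fam P) ->
    exists l : list (relA A), (forall ps, In ps l -> P ps) /\
      rsub th (cjoin_fam (fun ps => In ps l)).

Definition complemented (th : relA A) : Prop :=
  is_congruence th /\ exists ps, is_congruence ps /\
    reqv (cjoin th ps) cNabla /\ reqv (cmeet th ps) cDelta.

(** Commutator, via the term condition C(al, be; de). *)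
Definition sumv (a c : nat -> A) : nat + nat -> A :=
  fun z => match z with inl i => a i | inr j => c j end.

Definition centralizes (al be de : relA A) : Prop :=
  forall (t : term S (nat + nat)) (a b c d : nat -> A),
    (forall i, al (a i) (b i)) -> (forall j, be (c j) (d j)) ->
    de (eval (sumv a c) t) (eval (sumv a d) t) ->
    de (eval (sumv b c) t) (eval (sumv b d) t).

Definition comm (al be : relA A) : relA A :=
  fun x y => forall de, is_congruence de -> centralizes al be de -> de x y.

Definition prime_cong (ph : relA A) : Prop :=
  is_congruence ph /\ ~ reqv ph cNabla /\
  forall al be, is_congruence al -> is_congruence be ->
    rsub (comm al be) ph -> rsub al ph \/ rsub be ph.

Definition max_cong (ph : relA A) : Prop :=
  is_congruence ph /\ ~ reqv ph cNabla /\
  forall ps, is_congruence ps -> rsub ph ps -> reqv ps ph \/ reqv ps cNabla.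

Definition Rad : relA A := fun x y => forall ph, max_cong ph -> ph x y.

Definition rho (th : relA A) : relA A :=
  fun x y => forall ph, prime_cong ph -> rsub th ph -> ph x y.

Definition Dset (th : relA A) (ph : relA A) : Prop :=
  prime_cong ph /\ ~ rsub th ph.

(* open subsets of Max(A) in the subspace topology: Max(A) ∩ D_A(th) *)
Definition open_in_Max (W : relA A -> Prop) : Prop :=
  exists th, is_congruence th /\ forall ph, W ph <-> max_cong ph /\ Dset th ph.

Definition clopen_in_Max (W : relA A -> Prop) : Prop :=
  open_in_Max W /\ open_in_Max (fun ph => max_cong ph /\ ~ W ph).

End Cong.

Definition cong_modular_var (S : signature) (Sigma : term S nat -> term S nat -> Prop) :=
  forall B : algebra S, satisfies B Sigma ->
  forall al be ga : relA B, is_congruence al -> is_congruence be -> is_congruence ga ->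
    rsub al ga -> reqv (cmeet (cjoin al be) ga) (cjoin al (cmeet be ga)).

Definition semidegenerate_var (S : signature) (Sigma : term S nat -> term S nat -> Prop) :=
  forall B : algebra S, satisfies B Sigma ->
  forall x : B, (forall f : sym S, @op S B f (fun _ => x) = x) -> forall y z : B, y = z.

Definition compact_comm_closed_var (S : signature) (Sigma : term S nat -> term S nat -> Prop) :=
  forall B : algebra S, satisfies B Sigma ->
  forall al be : relA B, compact al -> compact be -> compact (comm al be).

(* lambda_B : B(Con B) -> B(L B) is onto.  In L(B) = K(B)/≡ one has
   [a] ∨ [b] = [a ∨ b], [a] ∧ [b] = [[a,b]], 0 = [Δ], 1 = [∇], and
   [a] = [b] iff rho a = rho b. *)
Definition preserves_boolean_center_var (S : signature)
  (Sigma : term S nat -> term S nat -> Prop) :=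
  forall B : algebra S, satisfies B Sigma ->
  forall al : relA B, compact al ->
    (exists be : relA B, compact be /\
       reqv (rho (cjoin al be)) (rho (@cNabla S B)) /\
       reqv (rho (comm al be)) (rho (@cDelta S B))) ->
    exists ga : relA B, compact ga /\ complemented ga /\ reqv (rho ga) (rho al).

(* Main.v *)
Require Import Defs.
From mathcomp Require Import all_boot.
From Stdlib Require Import ClassicalEpsilon FunctionalExtensionality PropExtensionality ProofIrrelevance Classical.
From Stdlib Require List.
Set Implicit Arguments. Unset Strict Implicit.



Lemma cong_refl (S : signature) (A : algebra S) (th : relA A) :
  is_congruence th -> forall x, th x x.
Proof. by case. Qed.
Lemma cong_sym (S : signature) (A : algebra S) (th : relA A) :
  is_congruence th -> forall x y, th x y -> th y x.
Proof. by case=> _ []. Qed.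
Lemma cong_trans (S : signature) (A : algebra S) (th : relA A) :
  is_congruence th -> forall x y z, th x y -> th y z -> th x z.
Proof. by case=> _ [] _ []. Qed.
Lemma cong_op (S : signature) (A : algebra S) (th : relA A) :
  is_congruence th -> forall (f : sym S) (a b : 'I_(arity f) -> A),
      (forall i, th (a i) (b i)) -> th (@op S A f a) (@op S A f b).
Proof. by case=> _ [] _ []. Qed.

Lemma cong_eval (S : signature) (A : algebra S) (th : relA A) (V : Type)
  (v w : V -> A) (t : term S V) :
  is_congruence th -> (forall n, th (v n) (w n)) -> th (eval v t) (eval w t).
Proof.
move=> Hc Hvw; elim: t => [x|f ts IH] //=.
exact: cong_op.
Qed.

Lemma cg_cong (S : signature) (A : algebra S) (R : relA A) : is_congruence (cg R).
Proof.
split; [|split; [|split]].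
- by move=> x th Hth _; apply: cong_refl.
- by move=> x y H th Hth HR; apply: cong_sym => //; apply: H.
- by move=> x y z H1 H2 th Hth HR; apply: (cong_trans Hth); [apply: H1|apply: H2].
- by move=> f a b H th Hth HR; apply: cong_op => // i; apply: H.
Qed.

Lemma cg_incl (S : signature) (A : algebra S) (R : relA A) : rsub R (cg R).
Proof. by move=> x y H th _ HR; apply: HR. Qed.

Lemma cg_min (S : signature) (A : algebra S) (R th : relA A) :
  is_congruence th -> rsub R th -> rsub (cg R) th.
Proof. by move=> Hth HR x y H; apply: H. Qed.

Lemma cg_mono (S : signature) (A : algebra S) (R R' : relA A) :
  rsub R R' -> rsub (cg R) (cg R').
Proof. move=> H; apply: cg_min; first exact: cg_cong.
by move=> x y /H; apply: cg_incl. Qed.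

Definition upd (T : Type) (n : nat) (a : 'I_n -> T) (i : 'I_n) (y : T) : 'I_n -> T :=
  fun j => if j == i then y else a j.

Definition compat1 (S : signature) (A : algebra S) (R : relA A) :=
  forall (f : sym S) (a : 'I_(arity f) -> A) i y, R (a i) y ->
    R (@op S A f a) (@op S A f (upd a i y)).

Lemma compat_of_compat1 (S : signature) (A : algebra S) (R : relA A) :
  (forall x, R x x) -> (forall x y z, R x y -> R y z -> R x z) -> compat1 R ->
  forall (f : sym S) (a b : 'I_(arity f) -> A),
      (forall i, R (a i) (b i)) -> R (@op S A f a) (@op S A f b).
Proof.
move=> Hr Ht Hc f a b Hab.
pose mix k := fun j : 'I_(arity f) => if (j < k)%N then b j else a j.
have Hk : forall k, (k <= arity f)%N -> R (@op S A f a) (@op S A f (mix k)).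
  elim=> [|k IH] Hk.
  - have -> : mix 0 = a by apply: functional_extensionality => j.
    exact: Hr.
  - apply: (Ht _ _ _ (IH (ltnW Hk))).
    have -> : mix k.+1 = upd (mix k) (Ordinal Hk) (b (Ordinal Hk)).
      apply: functional_extensionality => j; rewrite /mix /upd.
      case: (eqVneq j (Ordinal Hk)) => [->|Hne] /=; first by rewrite ltnSn.
      rewrite ltnS leq_eqVlt.
      have -> : (nat_of_ord j == k) = false.
        by apply/negbTE; apply: contra Hne => /eqP Hj; apply/eqP/val_inj.
      by [].
    apply: Hc; rewrite /mix /= ltnn; exact: Hab.
have -> : b = mix (arity f).
  by apply: functional_extensionality => j; rewrite /mix ltn_ord.
exact: Hk.
Qed.

Lemma cong_of_compat1 (S : signature) (A : algebra S) (R : relA A) :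
  (forall x, R x x) -> (forall x y, R x y -> R y x) ->
  (forall x y z, R x y -> R y z -> R x z) -> compat1 R -> is_congruence R.
Proof.
move=> Hr Hs Ht Hc; split; [done|split; [done|split; [done|]]].
exact: compat_of_compat1.
Qed.

Inductive tc (T : Type) (R : relA T) : relA T :=
| tc_step x y : R x y -> tc R x y
| tc_tr x y z : tc R x y -> tc R y z -> tc R x z.

Lemma tc_sym (T : Type) (R : relA T) :
  (forall x y, R x y -> R y x) -> forall x y, tc R x y -> tc R y x.
Proof.
move=> Hs x y; elim=> [a b /Hs H|a b c _ H1 _ H2]; first exact: tc_step.
exact: tc_tr H2 H1.
Qed.

Lemma tc_cong (S : signature) (A : algebra S) (R : relA A) :
  (forall x, R x x) -> (forall x y, R x y -> R y x) -> compat1 R ->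
  is_congruence (tc R).
Proof.
move=> Hr Hs Hc; apply: cong_of_compat1.
- by move=> x; apply: tc_step.
- exact: tc_sym.
- by move=> x y z; apply: tc_tr.
- move=> f a i y H.
  have : forall x, tc R x y -> forall a, a i = x -> tc R (@op S A f a) (@op S A f (upd a i y)).
    move=> x; elim=> [u w Huw|u w z _ IH1 _ IH2] a' Ha'.
    + by apply: tc_step; apply: Hc; rewrite Ha'.
    + apply: tc_tr (IH1 a' Ha') _.
      have -> : upd a' i z = upd (upd a' i w) i z.
        by apply: functional_extensionality => j; rewrite /upd; case: (j == i).
      by apply: IH2; rewrite /upd eqxx.
  by move=> /(_ _ H a erefl).
Qed.

Lemma tc_min (T : Type) (R th : relA T) :
  (forall x y z, th x y -> th y z -> th x z) -> rsub R th -> rsub (tc R) th.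
Proof. move=> Ht HR x y; elim=> [a b /HR //|a b c _ H1 _ H2]; exact: Ht H1 H2. Qed.


Lemma sig_eq (T : Type) (P : T -> Prop) (x y : {a | P a}) :
  proj1_sig x = proj1_sig y -> x = y.
Proof. case: x y => [a ha] [b hb] /= e; subst; f_equal; apply: proof_irrelevance. Qed.

Definition qcar (T : Type) (th : relA T) := {P : T -> Prop | exists x, P = th x}.
Definition qproj (T : Type) (th : relA T) (x : T) : qcar th :=
  exist _ (th x) (ex_intro _ x erefl).
Definition qrep (T : Type) (th : relA T) (q : qcar th) : T :=
  proj1_sig (constructive_indefinite_description _ (proj2_sig q)).
Lemma qrep_spec (T : Type) (th : relA T) (q : qcar th) : proj1_sig q = th (qrep q).
Proof. rewrite /qrep; case: constructive_indefinite_description => x //. Qed.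
Lemma qproj_rep (T : Type) (th : relA T) (q : qcar th) : qproj th (qrep q) = q.
Proof. apply: sig_eq => /=; by rewrite -qrep_spec. Qed.

Lemma qproj_eq (T : Type) (th : relA T) (Hr : forall x, th x x)
  (Hs : forall x y, th x y -> th y x) (Ht : forall x y z, th x y -> th y z -> th x z) x y :
  qproj th x = qproj th y <-> th x y.
Proof.
split.
- move=> /(congr1 (@proj1_sig _ _)) /= e; rewrite e; exact: Hr.
- move=> H; apply: sig_eq => /=; apply: functional_extensionality => z.
  apply: propositional_extensionality; split => H'.
  + exact: Ht (Hs _ _ H) H'.
  + exact: Ht H H'.
Qed.

Definition quot_alg (S : signature) (A : algebra S) (th : relA A) : algebra S :=
  @Algebra S (qcar th) (fun f a => qproj th (@op S A f (fun i => qrep (a i)))).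

Lemma qrep_proj (S : signature) (A : algebra S) (th : relA A) (Hc : is_congruence th) x :
  th (qrep (qproj th x)) x.
Proof.
have := qrep_spec (qproj th x) => /= e.
have : th x x by apply: cong_refl.
by rewrite e.
Qed.

Lemma qop_proj (S : signature) (A : algebra S) (th : relA A) (Hc : is_congruence th)
  f (a : 'I_(arity f) -> A) :
  @op S (quot_alg th) f (fun i => qproj th (a i)) = qproj th (@op S A f a).
Proof.
rewrite /=; apply/qproj_eq.
- exact: cong_refl.
- exact: cong_sym.
- exact: cong_trans.
apply: cong_op => // i; exact: qrep_proj.
Qed.

Lemma eval_quot (S : signature) (A : algebra S) (th : relA A) (Hc : is_congruence th)
  (V : Type) (v : V -> A) t :
  @eval S (quot_alg th) V (fun n => qproj th (v n)) t = qproj th (eval v t).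
Proof.
elim: t => [x|f ts IH] //=.
apply/qproj_eq.
- exact: cong_refl.
- exact: cong_sym.
- exact: cong_trans.
apply: cong_op => // i; rewrite IH; exact: qrep_proj.
Qed.

Lemma sat_quot (S : signature) (A : algebra S) (th : relA A) (Hc : is_congruence th)
  Sigma : satisfies A Sigma -> satisfies (quot_alg th) Sigma.
Proof.
move=> HA t u Htu v.
have -> : v = (fun n => qproj th (qrep (v n))).
  by apply: functional_extensionality => n; rewrite qproj_rep.
by rewrite !eval_quot // (HA t u Htu).
Qed.

Definition pow_alg (S : signature) (I : Type) (A : algebra S) : algebra S :=
  @Algebra S (I -> A) (fun f a => fun k => @op S A f (fun i => a i k)).

Lemma eval_pow (S : signature) (I : Type) (A : algebra S) (V : Type)
  (v : V -> I -> A) t k :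
  @eval S (pow_alg I A) V v t k = eval (fun n => v n k) t.
Proof.
elim: t => [x|f ts IH] //=; congr (@op S A f _).
by apply: functional_extensionality => i; rewrite IH.
Qed.

Lemma sat_pow (S : signature) (I : Type) (A : algebra S) Sigma :
  satisfies A Sigma -> satisfies (pow_alg I A) Sigma.
Proof.
move=> HA t u Htu v; apply: functional_extensionality => k.
by rewrite !eval_pow (HA t u Htu).
Qed.

Definition pcar (T : Type) (P : relA T) := {p : T * T | P p.1 p.2}.

Definition pair_alg (S : signature) (A : algebra S) (P : relA A)
  (HP : forall f (a b : 'I_(arity f) -> A), (forall i, P (a i) (b i)) ->
          P (@op S A f a) (@op S A f b)) : algebra S :=
  @Algebra S (pcar P) (fun f a =>
    exist _ (@op S A f (fun i => (proj1_sig (a i)).1), @op S A f (fun i => (proj1_sig (a i)).2))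
      (HP f _ _ (fun i => proj2_sig (a i)))).

Lemma eval_pair (S : signature) (A : algebra S) (P : relA A) HP (V : Type)
  (v : V -> @pair_alg S A P HP) t :
  proj1_sig (eval v t) =
    (eval (fun n => (proj1_sig (v n)).1) t, eval (fun n => (proj1_sig (v n)).2) t).
Proof.
elim: t => [x|f ts IH] /=; first by case: (proj1_sig (v x)).
congr pair; congr (@op S A f _); apply: functional_extensionality => i; by rewrite IH.
Qed.

Lemma sat_pair (S : signature) (A : algebra S) (P : relA A) HP Sigma :
  satisfies A Sigma -> satisfies (@pair_alg S A P HP) Sigma.
Proof.
move=> HA t u Htu v; apply: sig_eq; rewrite !eval_pair.
by rewrite (HA t u Htu (fun n => (proj1_sig (v n)).1)) (HA t u Htu (fun n => (proj1_sig (v n)).2)).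
Qed.


Lemma compat1_of_cong (S : signature) (A : algebra S) (th : relA A) :
  is_congruence th -> compat1 th.
Proof.
move=> Hc f a i y H; apply: cong_op => // j; rewrite /upd.
case: (eqVneq j i) => [->|_] //; exact: cong_refl.
Qed.

Lemma cjoin_fam_cong (S : signature) (A : algebra S) (P : relA A -> Prop) :
  is_congruence (cjoin_fam P).
Proof. exact: cg_cong. Qed.

Lemma cg_refl (S : signature) (A : algebra S) (R : relA A) x : cg R x x.
Proof. exact: (cong_refl (cg_cong R)). Qed.
Lemma cg_sym (S : signature) (A : algebra S) (R : relA A) x y : cg R x y -> cg R y x.
Proof. exact: (cong_sym (cg_cong R)). Qed.
Lemma cg_trans (S : signature) (A : algebra S) (R : relA A) x y z :
  cg R x y -> cg R y z -> cg R x z.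
Proof. exact: (cong_trans (cg_cong R)). Qed.

Lemma cjoin_fam_mono (S : signature) (A : algebra S) (P Q : relA A -> Prop) :
  (forall ps, P ps -> Q ps) -> rsub (cjoin_fam P) (cjoin_fam Q).
Proof. move=> H; apply: cg_mono => x y [th [/H Hq Hxy]]; by exists th; split. Qed.

Lemma cjoin_fam_incl (S : signature) (A : algebra S) (P : relA A -> Prop) ps :
  P ps -> rsub ps (cjoin_fam P).
Proof. move=> Hp x y H; apply: cg_incl; by exists ps; split. Qed.

Lemma cjoin_fam_fin (S : signature) (A : algebra S) (P : relA A -> Prop) x y :
  cjoin_fam P x y ->
  exists l, (forall ps, In ps l -> P ps) /\ cjoin_fam (fun ps => In ps l) x y.
Proof.
pose Fin := fun x y => exists l, (forall ps, In ps l -> P ps) /\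
                                  cjoin_fam (fun ps => In ps l) x y.
have HF : is_congruence Fin.
  apply: cong_of_compat1.
  - move=> z; exists nil; split => //; exact: cg_refl.
  - move=> a b [l [Hl H]]; exists l; split => //; exact: cg_sym.
  - move=> a b c [l1 [Hl1 H1]] [l2 [Hl2 H2]]; exists (l1 ++ l2)%list; split.
      by move=> ps Hps; case: (List.in_app_or _ _ _ Hps) => [/Hl1|/Hl2].
    apply: cg_trans.
    + move: H1; apply: cjoin_fam_mono => ps Hps; apply: List.in_or_app; by left.
    + move: H2; apply: cjoin_fam_mono => ps Hps; apply: List.in_or_app; by right.
  - move=> f a i z [l [Hl H]]; exists l; split => //.
    exact: compat1_of_cong (cjoin_fam_cong _) _ _ _ _ H.
apply: (cg_min HF) => a b [ps [Hp Hab]]; exists (ps :: nil); split.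
  by move=> q [<-|[]].
by apply: (cjoin_fam_incl (ps := ps)) => //; left.
Qed.

Lemma nabla_cong (S : signature) (A : algebra S) : is_congruence (@cNabla S A).
Proof. by split; [|split; [|split]]. Qed.

Lemma delta_cong (S : signature) (A : algebra S) : is_congruence (@cDelta S A).
Proof.
split; [|split; [|split]]; rewrite /cDelta //.
- by move=> x y z -> ->.
- by move=> f a b H; congr (@op S A f _); apply: functional_extensionality.
Qed.

Theorem nabla_compact (S : signature) Sigma (Hsd : semidegenerate_var Sigma)
  (A : algebra S) (HA : satisfies A Sigma) : compact (@cNabla S A).
Proof.
split; first exact: nabla_cong.
move=> P HP Hsub.
case: (Classical_Prop.classic (exists l : list (relA A), (forall ps, In ps l -> P ps) /\
      rsub (@cNabla S A) (cjoin_fam (fun ps => In ps l)))) => // Hno.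
case: (Classical_Prop.classic (inhabited A)) => [[a0]|Hnin]; last first.
  by exists nil; split => // x; case: Hnin; constructor.
pose I := {l : list (relA A) | forall ps, In ps l -> P ps}.
pose th := fun l : I => cjoin_fam (fun ps => In ps (proj1_sig l)).
pose incl := fun l0 l : I => forall ps, In ps (proj1_sig l0) -> In ps (proj1_sig l).
have thmono : forall l0 l, incl l0 l -> rsub (th l0) (th l).
  by move=> l0 l Hi; apply: cjoin_fam_mono.
have Hno' : forall l : I, exists p : A * A, ~ th l p.1 p.2.
  move=> [l Hl]; apply: NNPP => Hn; apply: Hno; exists l; split => //.
  move=> x y _; apply: NNPP => Hxy; apply: Hn; by exists (x, y).
have Hnil : forall ps, In ps nil -> P ps by move=> ps [].
pose nil' : I := exist _ nil Hnil.
have happ : forall l1 l2 : I, exists l : I, incl l1 l /\ incl l2 l.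
  move=> [l1 H1] [l2 H2].
  have H : forall ps, In ps (l1 ++ l2)%list -> P ps.
    by move=> ps Hps; case: (List.in_app_or _ _ _ Hps) => [/H1|/H2].
  exists (exist _ _ H); split => ps /= Hps; apply: List.in_or_app; by [left|right].
pose E := fun x y : I -> A => exists l0 : I, forall l, incl l0 l -> th l (x l) (y l).
have HE : is_congruence (A := pow_alg I A) E.
  apply: cong_of_compat1.
  - move=> x; exists nil' => l _; exact: cg_refl.
  - move=> x y [l0 H]; exists l0 => l Hl; apply: cg_sym; exact: H.
  - move=> x y z [l1 H1] [l2 H2]; have [l0 [i1 i2]] := happ l1 l2.
    exists l0 => l Hl; apply: cg_trans.
    + by apply: H1 => ps /i1 /Hl.
    + by apply: H2 => ps /i2 /Hl.
  - move=> f a i y [l0 H]; exists l0 => l Hl /=.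
    apply: cong_op; first exact: cjoin_fam_cong.
    move=> j; rewrite /upd; case: (eqVneq j i) => [->|_]; first exact: H.
    exact: cg_refl.
have HQ := sat_quot HE (sat_pow (I:=I) HA).
have Hid : forall f : sym S, @op S (quot_alg (A:=pow_alg I A) E) f (fun _ => qproj E (fun _ => a0)) =
                          qproj E (fun _ => a0).
  move=> f; rewrite (@qop_proj S (pow_alg I A) E HE f (fun _ => fun _ => a0)).
  apply/qproj_eq.
  - exact: cong_refl HE.
  - exact: cong_sym HE.
  - exact: cong_trans HE.
  have := Hsub (@op S A f (fun _ => a0)) a0 Logic.I.
  move=> /cjoin_fam_fin [l [Hl Hf]].
  exists (exist _ l Hl) => l' Hl' /=.
  exact: thmono Hl' _ _ Hf.
pose pk := fun l : I => proj1_sig (constructive_indefinite_description _ (Hno' l)).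
have Hpk : forall l, ~ th l (pk l).1 (pk l).2.
  by move=> l; rewrite /pk; case: constructive_indefinite_description.
have := Hsd _ HQ _ Hid (qproj E (fun l => (pk l).1)) (qproj E (fun l => (pk l).2)).
move/qproj_eq.
case/(_ (cong_refl HE) (cong_sym HE) (cong_trans HE)) => l0 H.
by case: (Hpk l0); apply: H.
Qed.

From mathcomp Require Import boolp classical_sets.


Lemma exists_max (S : signature) (A : algebra S) (Hn : compact (@cNabla S A))
  (th : relA A) (Hth : is_congruence th) (Hp : ~ rsub (@cNabla S A) th) :
  exists ps, max_cong ps /\ rsub th ps.
Proof.
pose T := {ps : relA A | is_congruence ps /\ rsub th ps /\ ~ rsub (@cNabla S A) ps}.
pose t0 : T := exist _ th (conj Hth (conj (fun x y (H : th x y) => H) Hp)).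
have [t Ht] : exists t, premaximal (fun s t : T => `[< rsub (proj1_sig s) (proj1_sig t) >]) t.
  apply: (ZL_preorder t0).
  - by move=> s; apply/asboolP => x y.
  - move=> r s u /asboolP H1 /asboolP H2; apply/asboolP => x y /H1 /H2 //.
  - move=> C Ctot.
    pose U := fun x y => th x y \/ exists s, C s /\ proj1_sig s x y.
    have Hmem : forall s : T, rsub th (proj1_sig s).
      by move=> [s [? [Hs ?]]].
    have Hcg : forall s : T, is_congruence (proj1_sig s).
      by move=> [s [Hs ?]].
    have HU : is_congruence U.
      apply: cong_of_compat1.
      - by move=> x; left; apply: cong_refl.
      - move=> x y [H|[s [Cs H]]]; [left; exact: cong_sym H|].
        by right; exists s; split => //; apply: cong_sym (Hcg s) _ _ H.
      - move=> x y z [H1|[s1 [Cs1 H1]]] [H2|[s2 [Cs2 H2]]].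
        + by left; apply: cong_trans H1 H2.
        + by right; exists s2; split => //; apply: (cong_trans (Hcg s2)) (Hmem _ _ _ H1) H2.
        + by right; exists s1; split => //; apply: (cong_trans (Hcg s1)) H1 (Hmem _ _ _ H2).
        + case: (Ctot _ _ Cs1 Cs2) => /asboolP Hs.
          * by right; exists s2; split => //; apply: (cong_trans (Hcg s2)) (Hs _ _ H1) H2.
          * by right; exists s1; split => //; apply: (cong_trans (Hcg s1)) H1 (Hs _ _ H2).
      - move=> f a i y [H|[s [Cs H]]].
        + by left; apply: compat1_of_cong.
        + by right; exists s; split => //; apply: compat1_of_cong.
    have HUp : ~ rsub (@cNabla S A) U.
      move=> Hsub.
      pose Pf := fun ps => ps = th \/ exists s, C s /\ ps = proj1_sig s.
      have HPf : forall ps, Pf ps -> is_congruence ps.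
        by move=> ps [->|[s [_ ->]]].
      have Hsub' : rsub (@cNabla S A) (cjoin_fam Pf).
        move=> x y /Hsub [H|[s [Cs H]]].
        + by apply: (cjoin_fam_incl (ps := th)) => //; left.
        + by apply: (cjoin_fam_incl (ps := proj1_sig s)) => //; right; exists s.
      have [l [Hl Hlsub]] := (proj2 Hn) Pf HPf Hsub'.
      have : exists m : T, (m = t0 \/ C m) /\ forall ps, In ps l -> rsub ps (proj1_sig m).
        elim: l Hl {Hlsub} => [|ps l IH] Hl.
          by exists t0; split => //; left.
        have [m [Hm0 Hm]] : exists m : T, (m = t0 \/ C m) /\ forall ps, In ps l -> rsub ps (proj1_sig m).
          by apply: IH => q Hq; apply: Hl; right.
        have [m' [Hm0' [Hm' Hmm']]] : exists m' : T, (m' = t0 \/ C m') /\ rsub ps (proj1_sig m') /\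
             rsub (proj1_sig m) (proj1_sig m').
          case: (Hl ps (or_introl erefl)) => [->|[s [Cs ->]]].
            by exists m; split => //; split => //; apply: Hmem.
          case: Hm0 => [->|Cm].
            by exists s; split; [right|split => //; apply: Hmem].
          case: (Ctot _ _ Cs Cm) => /asboolP Hs.
            by exists m; split; [right|split => // x y].
          by exists s; split; [right|split => // x y].
        exists m'; split => // q [<-|Hq] //.
        by move=> x y /(Hm _ Hq) /Hmm'.
      move=> [m [_ Hm]].
      have Hle : rsub (cjoin_fam (fun ps => In ps l)) (proj1_sig m).
        apply: cg_min; first exact: Hcg.
        by move=> x y [ps [Hps H]]; apply: Hm Hps _ _ H.
      case: m Hm Hle => [m [? [? Hmp]]] /= _ Hle.
      by apply: Hmp => x y /Hlsub /Hle.
    exists (exist _ U (conj HU (conj (fun x y H => or_introl H) HUp))).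
    by move=> s Cs; apply/asboolP => x y H; right; exists s.
have [Hps [Hthps Hpp]] := proj2_sig t.
exists (proj1_sig t); split => //; split => //; split.
  by move=> Hr; apply: Hpp => x y _; apply/Hr.
move=> q Hq Hpq.
case: (Classical_Prop.classic (rsub (@cNabla S A) q)) => Hnq.
  by right => x y; split => // _; apply: Hnq.
left.
have Hq' : is_congruence q /\ rsub th q /\ ~ rsub (@cNabla S A) q.
  by split => //; split => // x y /Hthps /Hpq.
have := Ht (exist _ q Hq').
move=> /(_ (introT (asboolP _) Hpq)) /asboolP H.
by move=> x y; split => [/H|/Hpq].
Qed.


Lemma comm_centralizes (S : signature) (A : algebra S) (al be : relA A) :
  centralizes al be (comm al be).
Proof.
move=> t a b c d Ha Hc Htop de Hde HC; apply: (HC t a b c d Ha Hc); exact: Htop.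
Qed.

Lemma comm_refl (S : signature) (A : algebra S) (al be : relA A) x : comm al be x x.
Proof. by move=> de Hde _; apply: cong_refl. Qed.

Lemma comm_cong (S : signature) (A : algebra S) (al be : relA A) :
  is_congruence (comm al be).
Proof.
split; [|split; [|split]].
- exact: comm_refl.
- by move=> x y H de Hde HC; apply: cong_sym => //; apply: H.
- by move=> x y z H1 H2 de Hde HC; apply: (cong_trans Hde); [apply: H1|apply: H2].
- by move=> f a b H de Hde HC; apply: cong_op => // i; apply: H.
Qed.

Lemma comm_sub_l (S : signature) (A : algebra S) (al be : relA A) :
  is_congruence al -> rsub (comm al be) al.
Proof.
move=> Hal x y H; apply: H => // t a b c d Ha Hc Htop.
apply: (cong_trans Hal); last apply: (cong_trans Hal Htop).
- apply: cong_eval => // -[n|n] /=; [exact: cong_sym (Ha n)|exact: cong_refl].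
- apply: cong_eval => // -[n|n] /=; [exact: Ha|exact: cong_refl].
Qed.

Lemma comm_sub_r (S : signature) (A : algebra S) (al be : relA A) :
  is_congruence be -> rsub (comm al be) be.
Proof.
move=> Hbe x y H; apply: H => // t a b c d Ha Hc Htop.
apply: cong_eval => // -[n|n] /=; [exact: cong_refl|exact: Hc].
Qed.

Fixpoint rename (S : signature) (V W : Type) (r : V -> W) (t : term S V) : term S W :=
  match t with
  | Var x => Var S (r x)
  | App f ts => App (fun i => rename r (ts i))
  end.

Lemma eval_rename (S : signature) (A : algebra S) (V W : Type) (r : V -> W) (v : W -> A) t :
  eval v (rename r t) = eval (fun x => v (r x)) t.
Proof.
elim: t => [x|f ts IH] //=; congr (@op S A f _).
by apply: functional_extensionality => i; rewrite IH.
Qed.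

Definition Rm (S : signature) (A : algebra S) (al be : relA A) : relA (pcar be) :=
  fun u v => exists (t : term S (nat + nat)) (a b c d : nat -> A),
    (forall i, al (a i) (b i)) /\ (forall j, be (c j) (d j)) /\
    proj1_sig u = (eval (sumv a c) t, eval (sumv a d) t) /\
    proj1_sig v = (eval (sumv b c) t, eval (sumv b d) t).

Definition shv (z : nat + nat) : nat + nat :=
  match z with inl k => inl k | inr k => inr k.*2.+1 end.


Lemma Rm_compat1 (S : signature) (A : algebra S) (al be : relA A)
  (Hal : is_congruence al) (Hbe : is_congruence be) :
  compat1 (A := pair_alg (cong_op Hbe)) (@Rm S A al be).
Proof.
move=> f a i y [t [a' [b' [c' [d' [Ha [Hc [Eu Ev]]]]]]]].
pose t' := App (f := f) (fun j => if j == i then rename shv t else Var S (inr (nat_of_ord j).*2)).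
pose par (g : nat -> A) (pr : A * A -> A) := fun m =>
  if odd m then g m./2 else
  match (insub m./2 : option 'I_(arity f)) with
  | Some j => pr (proj1_sig (a j)) | None => g 0 end.
have Hpar_odd : forall g pr k, par g pr k.*2.+1 = g k.
  by move=> g pr k; rewrite /par /= odd_double /= uphalf_double.
have Hpar_even : forall g pr (j : 'I_(arity f)), par g pr (nat_of_ord j).*2 = pr (proj1_sig (a j)).
  by move=> g pr j; rewrite /par odd_double doubleK valK.
exists t', a', b', (par c' fst), (par d' snd); split => //; split.
  move=> m; rewrite /par; case: (odd m) => //.
  case: (insub _) => [j|] //; exact: (proj2_sig (a j)).
have Hsh : forall (x : nat -> A) g pr, (fun z => sumv x (par g pr) (shv z)) = sumv x g.
  by move=> x g pr; apply: functional_extensionality => -[k|k] //=; rewrite Hpar_odd.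
split.
- rewrite /= /t' /=; congr pair; congr (@op S A f _); apply: functional_extensionality => j;
  case: (eqVneq j i) => [->|Hne]; rewrite ?eqxx ?(negbTE Hne) /= ?eval_rename ?Hsh ?Eu ?Hpar_even //.
- rewrite /= /t' /=; congr pair; congr (@op S A f _); apply: functional_extensionality => j;
  case: (eqVneq j i) => [->|Hne]; rewrite /upd ?eqxx ?(negbTE Hne) /= ?eval_rename ?Hsh ?Ev ?Hpar_even //.
Qed.


Definition pcg (S : signature) (A : algebra S) (u v : A) : relA A :=
  cg (fun p q => p = u /\ q = v).

Lemma pcg_min (S : signature) (A : algebra S) (th : relA A) (u v : A) :
  is_congruence th -> th u v -> rsub (pcg u v) th.
Proof. by move=> Hc H; apply: cg_min => // p q [-> ->]. Qed.

Lemma pcg_in (S : signature) (A : algebra S) (u v : A) : pcg u v u v.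
Proof. exact: cg_incl. Qed.

Lemma cjoin_l (S : signature) (A : algebra S) (al be : relA A) : rsub al (cjoin al be).
Proof. by move=> x y H; apply: cg_incl; left. Qed.
Lemma cjoin_r (S : signature) (A : algebra S) (al be : relA A) : rsub be (cjoin al be).
Proof. by move=> x y H; apply: cg_incl; right. Qed.
Lemma cjoin_min (S : signature) (A : algebra S) (al be th : relA A) :
  is_congruence th -> rsub al th -> rsub be th -> rsub (cjoin al be) th.
Proof. by move=> Hc H1 H2; apply: cg_min => // x y [/H1|/H2]. Qed.
Lemma cjoin_cong (S : signature) (A : algebra S) (al be : relA A) : is_congruence (cjoin al be).
Proof. exact: cg_cong. Qed.
Lemma cmeet_cong (S : signature) (A : algebra S) (al be : relA A) :
  is_congruence al -> is_congruence be -> is_congruence (cmeet al be).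
Proof.
move=> H1 H2; split; [|split; [|split]].
- by move=> x; split; apply: cong_refl.
- by move=> x y [? ?]; split; apply: cong_sym.
- by move=> x y z [? ?] [? ?]; split; [apply: (cong_trans H1)|apply: (cong_trans H2)]; eauto.
- by move=> f a b H; split; apply: cong_op => // i; case: (H i).
Qed.

Lemma pull1_cong (S : signature) (A : algebra S) (be th : relA A) (Hbe : is_congruence be) :
  is_congruence th ->
  is_congruence (A := pair_alg (cong_op Hbe)) (fun u v => th (proj1_sig u).1 (proj1_sig v).1).
Proof.
move=> Hc; split; [|split; [|split]].
- by move=> x; apply: cong_refl.
- by move=> x y; apply: cong_sym.
- by move=> x y z; apply: cong_trans.
- by move=> f a b H /=; apply: cong_op.
Qed.

Lemma pull2_cong (S : signature) (A : algebra S) (be th : relA A) (Hbe : is_congruence be) :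
  is_congruence th ->
  is_congruence (A := pair_alg (cong_op Hbe)) (fun u v => th (proj1_sig u).2 (proj1_sig v).2).
Proof.
move=> Hc; split; [|split; [|split]].
- by move=> x; apply: cong_refl.
- by move=> x y; apply: cong_sym.
- by move=> x y z; apply: cong_trans.
- by move=> f a b H /=; apply: cong_op.
Qed.

Lemma Rm_refl (S : signature) (A : algebra S) (al be : relA A) :
  is_congruence al -> forall u, @Rm S A al be u u.
Proof.
move=> Hal [[x y] H]; exists (Var S (inr 0)), (fun _ => x), (fun _ => x), (fun _ => x), (fun _ => y).
by split => [i|]; [apply: cong_refl|split].
Qed.

Lemma Rm_sym (S : signature) (A : algebra S) (al be : relA A) :
  is_congruence al -> forall u v, @Rm S A al be u v -> @Rm S A al be v u.
Proof.
move=> Hal u v [t [a [b [c [d [Ha [Hc [Eu Ev]]]]]]]].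
exists t, b, a, c, d; do ! split => //; move=> i; apply: cong_sym; auto.
Qed.

Lemma Rm_fst (S : signature) (A : algebra S) (al be : relA A) :
  is_congruence al -> forall u v, @Rm S A al be u v ->
  al (proj1_sig u).1 (proj1_sig v).1.
Proof.
move=> Hal u v [t [a [b [c [d [Ha [Hc [-> ->]]]]]]]] /=.
apply: cong_eval => // -[n|n] /=; [exact: Ha|exact: cong_refl].
Qed.

Lemma Rm_pres (S : signature) (A : algebra S) (al be de : relA A) :
  centralizes al be de -> forall u v, @Rm S A al be u v ->
  de (proj1_sig u).1 (proj1_sig u).2 -> de (proj1_sig v).1 (proj1_sig v).2.
Proof.
move=> HC u v [t [a [b [c [d [Ha [Hc [-> ->]]]]]]]] /=; exact: HC.
Qed.

Lemma tc_Rm_fst (S : signature) (A : algebra S) (al be : relA A) :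
  is_congruence al -> forall u v, tc (@Rm S A al be) u v ->
  al (proj1_sig u).1 (proj1_sig v).1.
Proof.
move=> Hal u v; elim=> [x y /(Rm_fst Hal) //|x y z _ H1 _ H2]; exact: cong_trans H1 H2.
Qed.

Lemma tc_Rm_pres (S : signature) (A : algebra S) (al be de : relA A) :
  centralizes al be de -> forall u v, tc (@Rm S A al be) u v ->
  de (proj1_sig u).1 (proj1_sig u).2 -> de (proj1_sig v).1 (proj1_sig v).2.
Proof.
move=> HC u v; elim=> [x y|x y z _ H1 _ H2]; [exact: Rm_pres|auto].
Qed.


Lemma Rm_gen (S : signature) (A : algebra S) (al be : relA A) (u v : pcar be) x y :
  al x y -> proj1_sig u = (x, x) -> proj1_sig v = (y, y) -> @Rm S A al be u v.
Proof.
move=> H Eu Ev; exists (Var S (inl 0)), (fun _ => x), (fun _ => y), (fun _ => x), (fun _ => x).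
split; first by [].
split; first by move=> _; have := proj2_sig u; rewrite Eu.
by split.
Qed.

Lemma maxprime_core (S : signature) Sigma (Hmod : cong_modular_var Sigma)
  (Hsd : semidegenerate_var Sigma) (A : algebra S) (HA : satisfies A Sigma)
  (al be ph : relA A) (Hal : is_congruence al) (Hbe : is_congruence be)
  (Hph : max_cong ph) (Hsub : rsub (comm al be) ph)
  (Hnal : ~ rsub al ph) (Hnbe : ~ rsub be ph) : False.
Proof.
have Hphc := proj1 Hph.
have Hjoin : forall x y, cjoin al ph x y.
  have [H|H] := (proj2 (proj2 Hph)) (cjoin al ph) (cjoin_cong _ _) (@cjoin_r S A al ph).
  - by exfalso; apply: Hnal => x y /(@cjoin_l S A al ph) /(H x y).
  - by move=> x y; apply/(H x y).
pose HP := cong_op Hbe.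
pose B := pair_alg HP.
have HB : satisfies B Sigma := @sat_pair S A be HP Sigma HA.
pose mk := fun x y (H : be x y) => (exist _ (x, y) H : B).
pose Th := tc (@Rm S A al be).
have HTh : is_congruence (A := B) Th := @tc_cong S B _ (@Rm_refl S A al be Hal) (@Rm_sym S A al be Hal) (@Rm_compat1 S A al be Hal Hbe).
pose ga := comm al be.
have HCga : centralizes al be ga := @comm_centralizes S A al be.
pose eta0 := fun u v : B => (proj1_sig u).1 = (proj1_sig v).1.
pose eta1 := fun u v : B => (proj1_sig u).2 = (proj1_sig v).2.
have Heta0 : is_congruence (A := B) eta0 := pull1_cong Hbe (delta_cong A).
have Heta1 : is_congruence (A := B) eta1 := pull2_cong Hbe (delta_cong A).
have star : forall u v : B, Th u v -> (proj1_sig u).1 = (proj1_sig v).1 ->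
    ga (proj1_sig u).2 (proj1_sig v).2.
  move=> [[x p] Hxp] [[x' q] Hxq] HT /= Ex; subst x'.
  have Hpq : be p q := cong_trans Hbe (cong_sym Hbe Hxp) Hxq.
  pose f0 := mk p p (cong_refl Hbe p). pose g0 := mk p q Hpq.
  pose c0 := mk x p Hxp. pose d0 := mk x q Hxq.
  pose b' := pcg (A := B) c0 d0.
  pose a' := cjoin (pcg (A := B) f0 c0) (pcg (A := B) d0 g0).
  pose c' := cjoin b' (pcg (A := B) f0 g0).
  have := Hmod B HB b' a' c' (cg_cong _) (cjoin_cong _ _) (cjoin_cong _ _) (@cjoin_l S B _ _).
  move=> /(_ f0 g0) [H _].
  have Hfg : cjoin b' (cmeet a' c') f0 g0.
    apply: H; split; last by apply: cjoin_r; apply: pcg_in.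
    apply: cg_trans; first by apply: cjoin_r; apply: cjoin_l; apply: pcg_in.
    apply: cg_trans; first by apply: cjoin_l; apply: pcg_in.
    by apply: cjoin_r; apply: cjoin_r; apply: pcg_in.
  have HfgT : Th f0 g0.
    apply: (@cjoin_min S B b' (cmeet a' c') Th HTh _ _ f0 g0 Hfg).
    - exact: pcg_min.
    - move=> s t [Ha' Hc'].
      have E1 : eta1 s t.
        by apply: (@cjoin_min S B _ _ eta1 Heta1 _ _ s t Ha'); apply: pcg_min.
      have E0 : eta0 s t.
        apply: (@cjoin_min S B _ _ eta0 Heta0 _ _ s t Hc'); apply: pcg_min => //.
      have -> : s = t.
        apply: sig_eq; move: E0 E1; rewrite /eta0 /eta1.
        by case: (proj1_sig s) (proj1_sig t) => s1 s2 [t1 t2] /= -> ->.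
      exact: (@cong_refl S B Th HTh t).
  exact: (@tc_Rm_pres S A al be ga HCga f0 g0 HfgT (@comm_refl S A al be p)).
have HThR : forall u v : B, @Rm S A al be u v -> Th u v by move=> u v H; apply: tc_step.
have shift : forall u v : B, Th u v -> ph (proj1_sig u).1 (proj1_sig u).2 ->
    ph (proj1_sig v).1 (proj1_sig v).2.
  move=> [[u1 u2] Hu] [[v1 v2] Hv] HT /= H12.
  have Hav : al u1 v1 := @tc_Rm_fst S A al be Hal _ _ HT.
  pose a0 := mk u1 u1 (cong_refl Hbe u1). pose b0 := mk u1 u2 Hu.
  pose c0 := mk v1 v1 (cong_refl Hbe v1). pose d0 := mk v1 v2 Hv.
  pose b'' := pcg (A := B) a0 b0.
  pose a'' := cjoin (pcg (A := B) c0 a0) (pcg (A := B) b0 d0).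
  pose c'' := cjoin b'' (pcg (A := B) c0 d0).
  have := Hmod B HB b'' a'' c'' (cg_cong _) (cjoin_cong _ _) (cjoin_cong _ _) (@cjoin_l S B _ _).
  move=> /(_ c0 d0) [H _].
  have Hcd : cjoin b'' (cmeet a'' c'') c0 d0.
    apply: H; split; last by apply: cjoin_r; apply: pcg_in.
    apply: cg_trans; first by apply: cjoin_r; apply: cjoin_l; apply: pcg_in.
    apply: cg_trans; first by apply: cjoin_l; apply: pcg_in.
    by apply: cjoin_r; apply: cjoin_r; apply: pcg_in.
  pose phi1 := fun u v : B => ph (proj1_sig u).2 (proj1_sig v).2.
  have Hphi1 : is_congruence (A := B) phi1 := pull2_cong Hbe Hphc.
  have := (@cjoin_min S B b'' (cmeet a'' c'') phi1 Hphi1 _ _ c0 d0 Hcd); apply.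
  - exact: pcg_min.
  - move=> s t [Ha Hc].
    have HsT : Th s t.
      apply: (@cjoin_min S B _ _ Th HTh _ _ s t Ha); apply: pcg_min => //.
      apply: HThR; apply: (@Rm_gen S A al be c0 a0 v1 u1) => //.
      exact: (cong_sym Hal).
    have E0 : eta0 s t.
      apply: (@cjoin_min S B _ _ eta0 Heta0 _ _ s t Hc); apply: pcg_min => //.
    exact: Hsub (star s t HsT E0).
pose phi2 := fun u v : B => ph (proj1_sig u).1 (proj1_sig v).1 /\ ph (proj1_sig u).2 (proj1_sig v).2.
have Hphi2 : is_congruence (A := B) phi2 := cmeet_cong (pull1_cong Hbe Hphc) (pull2_cong Hbe Hphc).
pose Psi := tc (fun u v : B => Th u v \/ phi2 u v).
have HPsi : is_congruence (A := B) Psi.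
  apply: tc_cong.
  - by move=> x; left; exact: (@cong_refl S B Th HTh x).
  - move=> x y [H|H]; [left; exact: (@cong_sym S B Th HTh _ _ H)|right; exact: (@cong_sym S B phi2 Hphi2 _ _ H)].
  - move=> f a i y [H|H].
    + by left; apply: (@compat1_of_cong S B Th HTh).
    + by right; apply: (@compat1_of_cong S B phi2 Hphi2).
have PsiPres : forall u v : B, Psi u v -> ph (proj1_sig u).1 (proj1_sig u).2 ->
    ph (proj1_sig v).1 (proj1_sig v).2.
  move=> u v; elim=> [x y [H|[H1 H2]]|x y z _ IH1 _ IH2]; last by auto.
  - exact: shift.
  - move=> Hx; apply: (cong_trans Hphc) H2; apply: (cong_trans Hphc) Hx.
    exact: (cong_sym Hphc).
pose kap := fun x y : A => Psi (mk x x (cong_refl Hbe x)) (mk y y (cong_refl Hbe y)).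
have Hkap : is_congruence kap.
  split; [|split; [|split]].
  - by move=> x; exact: (@cong_refl S B Psi HPsi).
  - by move=> x y; exact: (@cong_sym S B Psi HPsi).
  - by move=> x y z; exact: (@cong_trans S B Psi HPsi).
  - move=> f a b H.
    have := @cong_op S B Psi HPsi f (fun i => mk (a i) (a i) (cong_refl Hbe _))
               (fun i => mk (b i) (b i) (cong_refl Hbe _)) H.
    rewrite /kap.
    have -> : mk (@op S A f a) (@op S A f a) (cong_refl Hbe _) =
              @op S B f (fun i => mk (a i) (a i) (cong_refl Hbe _)) by apply: sig_eq.
    have -> : mk (@op S A f b) (@op S A f b) (cong_refl Hbe _) =
              @op S B f (fun i => mk (b i) (b i) (cong_refl Hbe _)) by apply: sig_eq.
    by [].
have Hk : forall x y, kap x y.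
  move=> x y; apply: (cjoin_min Hkap _ _ (Hjoin x y)).
  - move=> u v H; apply: tc_step; left; apply: HThR.
    exact: (@Rm_gen S A al be _ _ u v).
  - by move=> u v H; apply: tc_step; right; split.
have [a0 [b0 [Hab Hnab]]] : exists a0 b0, be a0 b0 /\ ~ ph a0 b0.
  apply: NNPP => Hn; apply: Hnbe => x y Hxy; apply: NNPP => Hn'; apply: Hn.
  by exists x, y.
pose Q := quot_alg (A := B) Psi.
have HQ : satisfies Q Sigma := sat_quot HPsi HB.
pose e := qproj Psi (mk a0 a0 (cong_refl Hbe a0)).
have Hid : forall f : sym S, @op S Q f (fun _ => e) = e.
  move=> f; rewrite /e (@qop_proj S B Psi HPsi f (fun _ => mk a0 a0 (cong_refl Hbe a0))).
  apply/qproj_eq.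
  - exact: (@cong_refl S B Psi HPsi).
  - exact: (@cong_sym S B Psi HPsi).
  - exact: (@cong_trans S B Psi HPsi).
  have := Hk (@op S A f (fun _ => a0)) a0; rewrite /kap.
  have -> : mk (@op S A f (fun _ => a0)) (@op S A f (fun _ => a0)) (cong_refl Hbe _) =
            @op S B f (fun _ => mk a0 a0 (cong_refl Hbe a0)) by apply: sig_eq.
  by [].
have := Hsd Q HQ e Hid e (qproj Psi (mk a0 b0 Hab)).
move/qproj_eq => /(_ (@cong_refl S B Psi HPsi) (@cong_sym S B Psi HPsi) (@cong_trans S B Psi HPsi)).
move=> /PsiPres /= /(_ (cong_refl Hphc a0)); exact: Hnab.
Qed.


Lemma max_prime (S : signature) Sigma (Hmod : cong_modular_var Sigma)
  (Hsd : semidegenerate_var Sigma) (A : algebra S) (HA : satisfies A Sigma)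
  (ph : relA A) : max_cong ph -> @prime_cong S A ph.
Proof.
move=> Hph; split; first exact: (proj1 Hph).
split; first exact: (proj1 (proj2 Hph)).
move=> al be Hal Hbe Hsub.
case: (Classical_Prop.classic (rsub al ph)) => Ha; first by left.
case: (Classical_Prop.classic (rsub be ph)) => Hb; first by right.
exfalso; exact: (maxprime_core Hmod Hsd HA Hal Hbe Hph Hsub Ha Hb).
Qed.

Lemma cg_fin_compact (S : signature) (A : algebra S) (R : relA A) (L : list (A * A)) :
  (forall x y, R x y -> In (x, y) L) -> compact (cg R).
Proof.
move=> HL; split; first exact: cg_cong.
move=> P HP Hsub.
have : exists l, (forall ps, In ps l -> P ps) /\
    forall x y, R x y -> In (x, y) L -> cjoin_fam (fun ps => In ps l) x y.
  elim: L {HL} => [|[x0 y0] L [l' [Hl' H']]].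
    by exists nil; split => // x y _ [].
  case: (Classical_Prop.classic (R x0 y0)) => Hr.
    have := Hsub x0 y0 (cg_incl Hr) => /cjoin_fam_fin [l0 [Hl0 H0]].
    exists (l0 ++ l')%list; split.
      by move=> ps Hps; case: (List.in_app_or _ _ _ Hps) => [/Hl0|/Hl'].
    move=> x y Hxy [E|Hin].
    + case: E => <- <-; move: H0; apply: cjoin_fam_mono => ps Hps.
      by apply: List.in_or_app; left.
    + move: (H' x y Hxy Hin); apply: cjoin_fam_mono => ps Hps.
      by apply: List.in_or_app; right.
  exists l'; split => // x y Hxy [E|Hin]; last exact: H'.
  by case: E => ??; subst; case: Hr.
move=> [l [Hl H]]; exists l; split => //.
apply: cg_min; first exact: cjoin_fam_cong.
move=> x y Hxy; exact: H _ _ Hxy (HL _ _ Hxy).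
Qed.

Lemma nabla_not_sub (S : signature) (A : algebra S) (ph : relA A) :
  max_cong ph -> ~ rsub (@cNabla S A) ph.
Proof. move=> [_ [Hn _]] H; apply: Hn => x y; split => // _; exact: H. Qed.

Theorem theorem5p14 (S : signature) (Sigma : term S nat -> term S nat -> Prop)
  (Hmod : cong_modular_var Sigma) (Hsd : semidegenerate_var Sigma)
  (Hcomp : compact_comm_closed_var Sigma)
  (Hbool : preserves_boolean_center_var Sigma)
  (A : algebra S) (HA : satisfies A Sigma)
  (U : relA A -> Prop) (HU : forall ph, U ph -> max_cong ph) :
  clopen_in_Max U <->
  exists al be : relA A, compact al /\ compact be /\
    reqv (cjoin al be) (@cNabla S A) /\ rsub (comm al be) (@Rad S A) /\
    (forall ph, U ph <-> max_cong ph /\ Dset al ph).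
Proof.
split.
- move=> [[th1 [Hth1 HU1]] [th2 [Hth2 HU2]]].
  have Hmp : forall ph, max_cong ph -> @prime_cong S A ph.
    move=> ph Hm; case: (Classical_Prop.classic (U ph)) => Hu.
    + by case: ((HU1 ph).1 Hu) => _ [].
    + by case: ((HU2 ph).1 (conj Hm Hu)) => _ [].
  have HinU : forall ph, U ph -> rsub th2 ph.
    move=> ph Hu; apply: NNPP => Hn.
    have := (HU2 ph).2 (conj (HU ph Hu) (conj (Hmp ph (HU ph Hu)) Hn)).
    by case.
  have HnotU : forall ph, max_cong ph -> ~ U ph -> rsub th1 ph.
    move=> ph Hm Hu; apply: NNPP => Hn; apply: Hu.
    exact: (HU1 ph).2 (conj Hm (conj (Hmp ph Hm) Hn)).
  have Hnab := nabla_compact Hsd HA.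
  have Hjoin : rsub (@cNabla S A) (cjoin th1 th2).
    apply: NNPP => Hn.
    have [ps [Hps Hsub]] := exists_max Hnab (cjoin_cong th1 th2) Hn.
    case: (Classical_Prop.classic (U ps)) => Hu.
    + have [_ [_ Hn1]] := (HU1 ps).1 Hu.
      by apply: Hn1 => x y /(@cjoin_l S A th1 th2) /Hsub.
    + have [_ [_ Hn2]] := (HU2 ps).1 (conj Hps Hu).
      by apply: Hn2 => x y /(@cjoin_r S A th1 th2) /Hsub.
  pose Pf := fun ps : relA A => exists L : list (A * A),
      (forall p, In p L -> th1 p.1 p.2 \/ th2 p.1 p.2) /\
      ps = cg (fun x y => In (x, y) L).
  have HPf : forall ps, Pf ps -> is_congruence ps.
    by move=> ps [L [_ ->]]; apply: cg_cong.
  have Hsub : rsub (@cNabla S A) (cjoin_fam Pf).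
    move=> x y /Hjoin; apply: cjoin_min; first exact: cjoin_fam_cong.
    + move=> a b H; apply: (@cjoin_fam_incl S A Pf (cg (fun x y => In (x, y) ((a, b) :: nil)))).
        by exists ((a, b) :: nil); split => // p [<-|[]]; left.
      by apply: cg_incl; left.
    + move=> a b H; apply: (@cjoin_fam_incl S A Pf (cg (fun x y => In (x, y) ((a, b) :: nil)))).
        by exists ((a, b) :: nil); split => // p [<-|[]]; right.
      by apply: cg_incl; left.
  have [l [Hl Hlsub]] := (proj2 Hnab) Pf HPf Hsub.
  have [Ls [HLs HLsub]] : exists Ls : list (A * A),
      (forall p, In p Ls -> th1 p.1 p.2 \/ th2 p.1 p.2) /\
      rsub (cjoin_fam (fun ps => In ps l)) (cg (fun x y => In (x, y) Ls)).
    elim: l Hl {Hlsub} => [|ps l IH] Hl.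
      exists nil; split => // x y; apply: cg_min; first exact: cg_cong.
      by move=> ? ? [? [[]]].
    have [L' [HL' Hsub']] := IH (fun q Hq => Hl q (or_intror Hq)).
    have [Lp [HLp Ep]] := Hl ps (or_introl erefl).
    exists (Lp ++ L')%list; split.
      by move=> p Hp; case: (List.in_app_or _ _ _ Hp) => [/HLp|/HL'].
    apply: cg_min; first exact: cg_cong.
    move=> x y [q [[<-|Hq] Hxy]].
    + move: Hxy; rewrite Ep; apply: cg_mono => a b Hab.
      by apply: List.in_or_app; left.
    + have := Hsub' x y (cjoin_fam_incl Hq Hxy).
      apply: cg_mono => a b Hab; by apply: List.in_or_app; right.
  pose al := cg (fun x y => In (x, y) Ls /\ th1 x y).
  pose be := cg (fun x y => In (x, y) Ls /\ th2 x y).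
  have Hal1 : rsub al th1 by apply: cg_min => // x y [].
  have Hbe2 : rsub be th2 by apply: cg_min => // x y [].
  have Hab : forall x y, cjoin al be x y.
    move=> x y; apply: (cg_min (cjoin_cong al be)) (HLsub _ _ (Hlsub x y Logic.I)).
    move=> a b Hin; case: (HLs _ Hin) => /= H.
    + by apply: cjoin_l; apply: cg_incl.
    + by apply: cjoin_r; apply: cg_incl.
  exists al, be; split; first by apply: (cg_fin_compact (L := Ls)) => x y [].
  split; first by apply: (cg_fin_compact (L := Ls)) => x y [].
  split; first by move=> x y; split.
  split.
    move=> x y Hc ps Hps.
    case: (Classical_Prop.classic (U ps)) => Hu.
    + apply: HinU Hu _ _ _; apply: Hbe2; exact: (comm_sub_r (cg_cong _) Hc).
    + apply: (HnotU ps Hps Hu); apply: Hal1; exact: (comm_sub_l (cg_cong _) Hc).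
  move=> ph; split.
  + move=> Hu; have [Hm [Hp Hn1]] := (HU1 ph).1 Hu.
    split => //; split => // Hsa.
    apply: (nabla_not_sub Hm) => x y _.
    apply: (@cjoin_min S A al be ph (proj1 Hm) Hsa _ x y (Hab x y)).
    by move=> a b /Hbe2 /(HinU ph Hu).
  + move=> [Hm [Hp Hna]]; apply: NNPP => Hu; apply: Hna.
    by move=> x y /Hal1 /(HnotU ph Hm Hu).
- move=> [al [be [Hal [Hbe [Hj [Hr HUe]]]]]].
  split.
    by exists al; split => //; exact: (proj1 Hal).
  exists be; split; first exact: (proj1 Hbe).
  move=> ph; split.
  + move=> [Hm Hu]; have Hp := max_prime Hmod Hsd HA Hm.
    split => //; split => // Hsb.
    have Hsa : rsub al ph.
      move=> x y Hxy; apply: NNPP => Hn; apply: Hu; apply/HUe; split => //; split => //.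
      by move=> H; apply: Hn; apply: H.
    apply: (nabla_not_sub Hm) => x y _.
    apply: (cjoin_min (proj1 Hm) Hsa Hsb); exact/(Hj x y).
  + move=> [Hm [Hp Hnb]]; split => // Hu.
    have [_ [_ Hna]] := (HUe ph).1 Hu.
    have Hc : rsub (comm al be) ph by move=> x y /Hr; apply.
    by case: ((proj2 (proj2 Hp)) al be (proj1 Hal) (proj1 Hbe) Hc).
Qed.
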